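(* Let $\Pi$ be a set of $n$ processes and let $(\mathcal{G}^r)_{r\ge 1}$ be a sequence of communication graphs on $\Pi$. Let $r_1<r_2<\dots<r_n$ be $n$ distinct rounds such that each of $\mathcal{G}^{r_1},\dots,\mathcal{G}^{r_n}$ is rooted (the root components $\operatorname{Root}(\mathcal{G}^{r_i})$ need not coincide), and let $G=\{\mathcal{G}^{r_1},\dots,\mathcal{G}^{r_n}\}$. Let $X\subseteq\Pi$ satisfy $X\cap\operatorname{Root}(\mathcal{G}^{r_i})\neq\emptyset$ for every $i\in\{1,\dots,n\}$. Then for every $p\in\Pi$ there exist $q\in X$ and $i\in\{1,\dots,n\}$ such that $q\in\operatorname{Root}(\mathcal{G}^{r_i})$ and $q\in \mathrm{CP}_p(r_i,r_n)$.
   Context: A communication graph on the process set $\Pi$ is a directed graph with vertex set $\Pi$ containing every self-loop $(p\to p)$. A root component of a graph $\mathcal{G}$ is a nonempty set $R\subseteq\Pi$ that is the vertex set of a strongly connected component of $\mathcal{G}$ such that whenever $(p\to q)\in\mathcal{G}$ with $q\in R$, also $p\in R$. A graph is rooted if it has exactly one root component, denoted $\operatorname{Root}(\mathcal{G})$. For two graphs $\mathcal{G},\mathcal{G}'$ on the same vertex set $V$, the compound graph $\mathcal{G}\circ\mathcal{G}'$ has edge $(p,q)$ iff there is $p'\in V$ with $(p,p')\in\mathcal{G}$ and $(p',q)\in\mathcal{G}'$. For rounds $a\le b$, the causal past of $p$ is $\mathrm{CP}_p(a,b)=\{p\}$ if $a=b$, and $\mathrm{CP}_p(a,b)=\{q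 : (q,p)\in \mathcal{G}^{a+1}\circ\cdots\circ\mathcal{G}^{b}\}$ if $a<b$. *)

(* Defs.v *)
From mathcomp Require Import all_boot.
Set Implicit Arguments. Unset Strict Implicit. Unset Printing Implicit Defensive.

(* Communication graphs on a finite process set T, as relations: g p q = edge p -> q. *)
Section Graphs.
Variable T : finType.

Definition comm_graph (g : rel T) : Prop := forall p, g p p.

Definition is_scc (g : rel T) (R : {set T}) : bool :=
  [exists p, R == [set q | connect g p q && connect g q p]].

Definition is_root_component (g : rel T) (R : {set T}) : bool :=
  [&& R != set0, is_scc g R &
      [forall p, forall q, g p q ==> (q \in R) ==> (p \in R)]].

Definition rooted (g : rel T) : bool :=
  #|[set R : {set T} | is_root_component g R]| == 1.

(* Root g: the union of root components (the unique one when g is rooted) *)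
Definition Root (g : rel T) : {set T} :=
  \bigcup_(R : {set T} | is_root_component g R) R.

Definition compound (g g' : rel T) : rel T :=
  fun p q => [exists p', g p p' && g' p' q].

(* cgraph G a k = G (a+1) o G (a+2) o ... o G (a+k+1) *)
Fixpoint cgraph (G : nat -> rel T) (a k : nat) : rel T :=
  match k with
  | 0 => G a.+1
  | k'.+1 => compound (cgraph G a k') (G (a + k'.+2))
  end.

Definition CP (G : nat -> rel T) (p : T) (a b : nat) : {set T} :=
  if a < b then [set q | cgraph G a (b - a).-1 q p] else [set p].

End Graphs.

(* Main.v *)
Require Import Defs.
From mathcomp Require Import all_boot.
From mathcomp Require Import zify.
From Stdlib Require Import Classical.

Set Implicit Arguments. Unset Strict Implicit. Unset Printing Implicit Defensive.

Section Aux.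
Variable T : finType.

Definition Nb (g : rel T) (S : {set T}) : {set T} :=
  [set x | [exists y in S, g x y]].

Lemma anc_root (g : rel T) m : forall s,
  #|[set x | connect g x s]| <= m ->
  exists R, is_root_component g R && (R \subset [set x | connect g x s]).
Proof.
elim: m => [|m IH] s Hc.
  have : 0 < #|[set x | connect g x s]| by apply/card_gt0P; exists s; rewrite inE connect0.
  by rewrite leqn0 in Hc; rewrite (eqP Hc).
case: (pickP [pred x | connect g x s && ~~ connect g s x]) => [x /andP [hxs hsx]|Hn].
  have sub : [set y | connect g y x] \proper [set y | connect g y s].
    apply/properP; split.
      by apply/subsetP => y; rewrite !inE => hy; apply: connect_trans hy hxs.
    by exists s; rewrite !inE ?connect0 // (negbTE hsx).
  have lt := proper_card sub.
  have [R /andP [HR HRs]] := IH x (leq_trans lt Hc).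
  exists R; rewrite HR /=; apply: subset_trans HRs (proper_sub sub).
exists [set q | connect g s q && connect g q s].
apply/andP; split; last first.
  by apply/subsetP => y; rewrite !inE => /andP [].
apply/and3P; split.
- by apply/set0Pn; exists s; rewrite inE connect0.
- by apply/existsP; exists s.
- apply/forallP => x; apply/forallP => y; apply/implyP => gxy; apply/implyP.
  rewrite !inE => /andP [hsy hys].
  have hxs : connect g x s by apply: connect_trans (connect1 gxy) hys.
  rewrite hxs andbT.
  by move: (Hn x) => /=; rewrite hxs /= => /negbFE.
Qed.

Lemma root_eq (g : rel T) R : rooted g -> is_root_component g R -> Root g = R.
Proof.
rewrite /rooted => /cards1P [R0 E] HR.
have key : forall R', is_root_component g R' = (R' == R).
  move=> R'.
  have e1 : forall R'', is_root_component g R'' = (R'' == R0).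
    by move=> R''; rewrite -in_set1 -E inE.
  by rewrite e1 -(eqP (etrans (esym (e1 R)) HR)).
by rewrite /Root (eq_bigl _ _ key) big_pred1_eq.
Qed.

Lemma growth (g : rel T) S : comm_graph g -> rooted g -> S != set0 ->
  ~~ (Root g \subset S) -> #|S| < #|Nb g S|.
Proof.
move=> hc hr hS hR.
have sub : S \subset Nb g S.
  by apply/subsetP => x xS; rewrite inE; apply/existsP; exists x; rewrite xS hc.
rewrite ltn_neqAle subset_leq_card // andbT.
apply/negP => /eqP E.
have ENS : Nb g S = S.
  by apply/eqP; rewrite eq_sym eqEcard sub E leqnn.
have clos : forall x y, connect g x y -> y \in S -> x \in S.
  move=> x y /connectP [pth Hp ->].
  elim: pth x Hp => [|z pth IH] x //= /andP [gxz Hp] H.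
  have zS := IH z Hp H.
  by rewrite -ENS inE; apply/existsP; exists z; rewrite zS.
have [s0 s0S] := set0Pn _ hS.
have [R /andP [HR HRs]] := @anc_root g _ s0 (leqnn _).
move/negP: hR; apply; rewrite (root_eq hr HR).
apply/subsetP => x /(subsetP HRs); rewrite inE => hx.
exact: clos hx s0S.
Qed.

Lemma cg_cons (G : nat -> rel T) a k x y z :
  G a.+1 x y -> cgraph G a.+1 k y z -> cgraph G a k.+1 x z.
Proof.
move=> Hxy; elim: k z => [|k IH] z /=.
  by move=> H; apply/existsP; exists y; rewrite Hxy /= addn2.
case/existsP => w /andP [H1 H2]; apply/existsP; exists w.
apply/andP; split; first exact: IH.
by move: H2; rewrite addSn -addnS.
Qed.

Lemma CP_cons (G : nat -> rel T) p a b x y : a < b -> G a.+1 x y ->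
  y \in CP G p a.+1 b -> x \in CP G p a b.
Proof.
move=> Hab Hxy; rewrite /CP Hab; case: ltnP => h.
  rewrite !inE => H.
  have -> : (b - a).-1 = (b - a.+1).-1.+1.
    rewrite prednK; first by rewrite subnS.
    by rewrite subn_gt0.
  exact: cg_cons Hxy H.
have eb : b = a.+1 by apply/eqP; rewrite eqn_leq h Hab.
subst b; rewrite !inE => /eqP Ey.
by rewrite -Ey subSnn.
Qed.

Lemma CP_down (G : nat -> rel T) p a c b x :
  (forall t, 0 < t -> comm_graph (G t)) -> a <= c -> c <= b ->
  x \in CP G p c b -> x \in CP G p a b.
Proof.
move=> hc; elim: c => [|c IH] hac hcb hx.
  by move: hac; rewrite leqn0 => /eqP ->.
case: (ltngtP a c.+1) => hac'; last 2 first.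
- by rewrite leqNgt hac' in hac.
- by rewrite hac'.
apply: IH; first by [].
  exact: ltnW.
by apply: CP_cons hx; [exact: hcb | apply: hc].
Qed.

End Aux.

Theorem lemma1 (T : finType) (G : nat -> rel T) (r : nat -> nat) (X : {set T}) :
  (forall t, 0 < t -> comm_graph (G t)) ->
  0 < r 1 ->
  (forall i j, 1 <= i -> i < j -> j <= #|T| -> r i < r j) ->
  (forall i, 1 <= i <= #|T| -> rooted (G (r i))) ->
  (forall i, 1 <= i <= #|T| -> X :&: Root (G (r i)) != set0) ->
  forall p : T, exists q : T, exists i : nat,
    [/\ q \in X, 1 <= i <= #|T|, q \in Root (G (r i)) & q \in CP G p (r i) (r #|T|)].
Proof.
move=> hc hr1 hmono hroot hX p.
apply: NNPP => H.
set n := #|T|.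
have n1 : 0 < n by apply/card_gt0P; exists p.
have rpos : forall i, 1 <= i <= n -> 0 < r i.
  move=> i /andP [h1 h2]; case: (ltngtP 1 i) => h.
  - exact: ltn_trans hr1 (hmono _ _ (leqnn 1) h h2).
  - by rewrite ltnNge h1 in h.
  - by rewrite -h.
have rle : forall i, 1 <= i <= n -> r i <= r n.
  move=> i /andP [h1 h2]; case: (ltngtP i n) => h.
  - exact: ltnW (hmono _ _ h1 h (leqnn _)).
  - by rewrite ltnNge h2 in h.
  - by rewrite h.
set S := fun i => CP G p (r i) (r n).
have notsub : forall i, 1 <= i <= n -> ~~ (Root (G (r i)) \subset S i).
  move=> i hi; apply/negP => hs.
  have [q] := set0Pn _ (hX i hi); rewrite inE => /andP [qX qR].
  apply: H; exists q, i; split => //; exact: (subsetP hs).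
have NbS : forall i, 1 <= i < n -> Nb (G (r i.+1)) (S i.+1) \subset S i.
  move=> i /andP [h1 h2]; apply/subsetP => x; rewrite inE => /existsP [y /andP [yS gxy]].
  have hi1 : 1 <= i.+1 <= n by rewrite h2 andbT.
  have := rpos _ hi1; case E: (r i.+1) => [|c] // _.
  have hcn : c < r n by have := rle _ hi1; rewrite E.
  rewrite /S E in gxy yS.
  have := CP_cons hcn gxy yS => hx.
  apply: CP_down hx => //; last exact: ltnW.
  by have := hmono i i.+1 h1 (ltnSn i) h2; rewrite E ltnS.
have growS : forall i, 1 <= i <= n -> S i != set0 -> #|S i| < #|Nb (G (r i)) (S i)|.
  move=> i hi hS; apply: growth => //; [exact: hc (rpos _ hi) | exact: hroot | exact: notsub].
have claim : forall k, k < n -> k < #|S (n - k)|.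
  elim=> [|k IH] hk.
    rewrite subn0 /S /CP ltnn cards1 //.
  have hk' : k < n by apply: ltnW.
  have IHk := IH hk'.
  have ei : n - k = (n - k.+1).+1 by rewrite subnS prednK // subn_gt0.
  have hi : 1 <= n - k <= n by rewrite subn_gt0 hk' leq_subr.
  have hne : S (n - k) != set0 by apply/set0Pn/card_gt0P; apply: leq_ltn_trans IHk.
  have g1 := growS _ hi hne.
  have sub : Nb (G (r (n - k))) (S (n - k)) \subset S (n - k.+1).
    rewrite ei; apply: NbS; apply/andP; split.
      by rewrite subn_gt0.
    by rewrite ltn_subrL n1.
  exact: leq_trans (leq_ltn_trans IHk g1) (subset_leq_card sub).
have hlt : n.-1 < n by rewrite prednK.
have c1 := claim n.-1 hlt.
have e1 : n - n.-1 = 1 by rewrite -(prednK n1) subSnn.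
rewrite e1 in c1.
have hi : 1 <= 1 <= n by rewrite n1.
have hne : S 1 != set0 by apply/set0Pn/card_gt0P; apply: leq_ltn_trans c1.
have g1 := growS _ hi hne.
have := max_card (Nb (G (r 1)) (S 1)).
rewrite -/n => hm.
have := leq_trans (leq_ltn_trans c1 g1) hm.
by rewrite prednK // ltnn.
Qed.
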